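(* Let $n\ge 2$, $p\in(0,1)$, and let $Y,\mu,\sigma^2,\gamma_s$ be as follows: $Y$ is the number of isolated vertices of the Erdős–Rényi random graph on $n$ vertices with edge probability $p$, $\mu=E Y$, $\sigma^2=\mathrm{Var}(Y)$, and $\gamma_s=e^s(pe^s+1-p)^{n-2}(npe^s+1-p)+(n-1)p+1$. Then for every $\theta_0\ge 0$, $$P\Big(\frac{Y-\mu}{\sigma}\ge t\Big)\le\begin{cases}\exp\Big(-\dfrac{t^2\sigma^2}{\mu\,\gamma_{\theta_0/\sigma}}\Big), & t\in\big[0,\ \theta_0\mu\gamma_{\theta_0/\sigma}/(2\sigma^2)\big],\\[2mm] \exp\Big(-\theta_0t+\dfrac{\mu\gamma_{\theta_0/\sigma}\theta_0^2}{4\sigma^2}\Big), & t>\theta_0\mu\gamma_{\theta_0/\sigma}/(2\sigma^2).\end{cases}$$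
   Context: The Erdős–Rényi random graph on $\{1,\ldots,n\}$ with edge probability $p$ has independent Bernoulli($p$) edge indicators for all unordered pairs of distinct vertices. An isolated vertex is a vertex of degree $0$. Here $\mu=n(1-p)^{n-1}$ and $\sigma^2=n(1-p)^{n-1}(1+np(1-p)^{n-2}-(1-p)^{n-2})$. *)

(* Defs.v *)
From mathcomp Require Import all_boot.
From Stdlib Require Import Reals.



Unset Printing Implicit Defensive.

(* Possible edges of the complete graph on vertex set 'I_n: 2-element sets. *)
Definition pairs (n : nat) : {set {set 'I_n}} := [set e : {set 'I_n} | #|e| == 2].

Definition prob (n : nat) (p : R) (E : {set {set 'I_n}}) : R :=
  Rmult (pow p #|E|) (pow (Rminus 1 p) (#|pairs n| - #|E|)%N).

Definition Expect (n : nat) (p : R) (f : {set {set 'I_n}} -> R) : R :=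
  \big[Rplus/0%R]_(E in powerset (pairs n)) Rmult (prob n p E) (f E).

Definition Yiso (n : nat) (E : {set {set 'I_n}}) : nat :=
  #|[set v : 'I_n | [forall e in E, v \notin e]]|.

Definition Y (n : nat) (E : {set {set 'I_n}}) : R := INR (Yiso n E).

Open Scope R_scope.

Definition muY (n : nat) (p : R) : R := Expect n p (fun E => Y n E).
Definition var (n : nat) (p : R) : R := Expect n p (fun E => (Y n E - muY n p) ^ 2).
Definition sdY (n : nat) (p : R) : R := sqrt (var n p).

Definition tailP (n : nat) (p t : R) : R :=
  Expect n p (fun E => if Rle_dec t ((Y n E - muY n p) / sdY n p) then 1 else 0).

Definition gammaER (n : nat) (p s : R) : R :=
  exp s * (p * exp s + 1 - p) ^ (n - 2)%nat * (INR n * p * exp s + 1 - p)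
  + INR (n - 1)%nat * p + 1.

Close Scope R_scope.

(* Main.v *)
Require Import Defs.
From mathcomp Require Import all_boot.
From Stdlib Require Import Reals.
From Stdlib Require Import Lra.
From mathcomp Require Import Rstruct.

Open Scope R_scope.

Lemma dpl_ext (f g : R -> R) x l : (forall y, f y = g y) ->
  derivable_pt_lim f x l -> derivable_pt_lim g x l.
Proof.
move=> H D eps he; have [d Hd] := D eps he; exists d => h h0 hd.
rewrite -!H; exact: Hd.
Qed.

Lemma decr_deriv (g g' : R -> R) (a b : R) : a <= b ->
  (forall x, a <= x <= b -> derivable_pt_lim g x (g' x)) ->
  (forall x, a <= x <= b -> g' x <= 0) -> g b <= g a.
Proof.
move=> ab D N; case: (Rle_lt_or_eq_dec a b ab) => [lt|->]; last lra.
have [c [e hc]] := MVT_cor2 g g' a b lt D.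
have := N c ltac:(lra); have : 0 < b - a by lra.
move=> h1 h2; have : g' c * (b - a) <= 0 by nra.
lra.
Qed.

Lemma exp_half (x : R) : 0 <= x -> exp x - 1 <= x / 2 * (exp x + 1).
Proof.
move=> hx.
pose g := fun y => exp y - 1 - y / 2 * (exp y + 1).
pose g' := fun y => (exp y - 1 - y * exp y) / 2.
suff : g x <= g 0.
  rewrite /g exp_0; lra.
apply: (decr_deriv g g') => // y hy.
  rewrite /g /g'.
  have -> : (exp y - 1 - y * exp y) / 2 = (exp y - 0) - ((/2) * (exp y + 1) + y / 2 * (exp y + 0)) by field.
  apply: derivable_pt_lim_minus.
    apply: derivable_pt_lim_minus; [exact: derivable_pt_lim_exp | exact: derivable_pt_lim_const].
  apply: (dpl_ext (fun y => (y / 2) * (exp y + 1))) => [z //|].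
  apply: derivable_pt_lim_mult.
    apply: (dpl_ext (fun y => /2 * y)) => [z|]; first by rewrite /Rdiv Rmult_comm.
    have := derivable_pt_lim_scal id (/2) y 1 (derivable_pt_lim_id y).
    by rewrite Rmult_1_r.
  apply: derivable_pt_lim_plus; [exact: derivable_pt_lim_exp | exact: derivable_pt_lim_const].
rewrite /g'.
have h1 := exp_ineq1_le (- y).
have h2 : exp y * exp (- y) = 1 by rewrite -exp_plus Rplus_opp_r exp_0.
have h3 : 0 < exp y := exp_pos y.
have : exp y * (1 - y) <= 1.
  rewrite -h2; apply: Rmult_le_compat_l; lra.
lra.
Qed.

Lemma exp_INR (c : R) (k : nat) : exp (c * INR k) = exp c ^ k.
Proof.
elim: k => [|k IH]; first by rewrite /= Rmult_0_r exp_0.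
by rewrite S_INR Rmult_plus_distr_l exp_plus IH Rmult_1_r /= Rmult_comm.
Qed.

Lemma prod_ge1 (p a : R) : 0 <= p <= 1 ->
  1 <= (p * exp a + 1 - p) * (p * exp (- a) + 1 - p).
Proof.
move=> hp.
have h2 : exp a * exp (- a) = 1 by rewrite -exp_plus Rplus_opp_r exp_0.
have ha := exp_pos a; have hb := exp_pos (- a).
have : 2 <= exp a + exp (- a).
  have : 0 <= (exp a - exp (- a)) ^ 2 by apply: pow2_ge_0.
  move=> h; nra.
have : 0 <= p * (1 - p) by nra.
nra.
Qed.

Lemma deriv_sum (I : Type) (r : seq I) (P : pred I) (g dg : I -> R -> R) x :
  (forall i, derivable_pt_lim (g i) x (dg i x)) ->
  derivable_pt_lim (fun a => \big[Rplus/0]_(i <- r | P i) g i a) x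
                   (\big[Rplus/0]_(i <- r | P i) dg i x).
Proof.
move=> D; elim: r => [|i r IH].
  rewrite big_nil; apply: (dpl_ext (fun _ => 0)) => [y|].
    by rewrite big_nil.
  exact: derivable_pt_lim_const.
rewrite big_cons; case Pi: (P i).
  apply: (dpl_ext (fun a => g i a + \big[Rplus/0]_(j <- r | P j) g j a)) => [y|].
    by rewrite big_cons Pi.
  exact: derivable_pt_lim_plus.
apply: (dpl_ext (fun a => \big[Rplus/0]_(j <- r | P j) g j a)) => [y|//].
by rewrite big_cons Pi.
Qed.

Lemma exp_le (x y : R) : x <= y -> exp x <= exp y.
Proof.
move=> h; case: (Rle_lt_or_eq_dec x y h) => [lt|->]; last lra.
by apply: Rlt_le; apply: exp_increasing.
Qed.

Lemma leR_nat {m k : nat} : (m <= k)%nat -> INR m <= INR k.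
Proof. by move/leP; apply: le_INR. Qed.


Lemma Rle_big (I : finType) (P : pred I) (F G : I -> R) :
  (forall i, P i -> F i <= G i) ->
  \big[Rplus/0]_(i | P i) F i <= \big[Rplus/0]_(i | P i) G i.
Proof.
move=> H; elim/big_rec2: _ => [|i x y Pi Hxy]; first lra.
have := H i Pi; lra.
Qed.

Lemma Rle0_big (I : finType) (P : pred I) (F : I -> R) :
  (forall i, P i -> 0 <= F i) -> 0 <= \big[Rplus/0]_(i | P i) F i.
Proof.
move=> H; elim/big_rec: _ => [|i x Pi Hx]; first lra.
have := H i Pi; lra.
Qed.

Lemma iter_Rplus (n : nat) (c : R) : iter n (Rplus c) 0 = INR n * c.
Proof. elim: n => [|n IH]; first (simpl; ring). rewrite iterS IH S_INR; ring. Qed.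

Section Gen.
Variable T : finType.
Variable p : R.
Definition w (U E : {set T}) : R := p ^ #|E| * (1 - p) ^ (#|U| - #|E|).
Definition EU (U : {set T}) (F : {set T} -> R) : R :=
  \big[Rplus/0]_(E in powerset U) (w U E * F E).

Lemma w_split (A B E1 E2 : {set T}) : A :&: B = set0 ->
  E1 \subset A -> E2 \subset B ->
  w (A :|: B) (E1 :|: E2) = w A E1 * w B E2.
Proof.
move=> AB sA sB.
have cAB : #|A :|: B| = (#|A| + #|B|)%nat by rewrite cardsU AB cards0 subn0.
have E12 : E1 :&: E2 = set0.
  apply/eqP; rewrite -subset0 -AB; exact: setISS.
have cE : #|E1 :|: E2| = (#|E1| + #|E2|)%nat by rewrite cardsU E12 cards0 subn0.
have l1 := subset_leq_card sA; have l2 := subset_leq_card sB.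
rewrite /w cAB cE pow_add.
have -> : (#|A| + #|B| - (#|E1| + #|E2|) = (#|A| - #|E1|) + (#|B| - #|E2|))%nat.
  by rewrite subnDA addnC -addnBA // addnC -addnBA // addnC.
rewrite pow_add; ring.
Qed.

Lemma EU_split (A B : {set T}) (F : {set T} -> R) : A :&: B = set0 ->
  EU (A :|: B) F = \big[Rplus/0]_(E1 in powerset A) \big[Rplus/0]_(E2 in powerset B)
     (w A E1 * w B E2 * F (E1 :|: E2)).
Proof.
move=> AB.
pose h := fun x : {set T} * {set T} => x.1 :|: x.2.
pose D := [pred x : {set T} * {set T} | (x.1 \in powerset A) && (x.2 \in powerset B)].
have ePS : powerset (A :|: B) = h @: D.
  apply/setP => E; apply/idP/imsetP.

    rewrite inE => sE; exists (E :&: A, E :&: B).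
      by rewrite inE /= !inE !subsetIr.
    by rewrite /h /= -setIUr; apply/esym/setIidPl.
  move=> [[E1 E2]]; rewrite inE /= !inE => /andP [s1 s2] ->.
  by rewrite /h /= setUSS.
have inj : {in D &, injective h}.
  move=> [E1 E2] [F1 F2]; rewrite !inE /= => /andP [s1 s2] /andP [t1 t2].
  rewrite /h /= => e.
  have e1 : E1 = (E1 :|: E2) :&: A.
    rewrite setIUl (setIidPl s1).
    have -> : E2 :&: A = set0 by apply/eqP; rewrite -subset0 -AB setIC; exact: setIS.
    by rewrite setU0.
  have e2 : E2 = (E1 :|: E2) :&: B.
    rewrite setIUl (setIidPl s2).
    have -> : E1 :&: B = set0 by apply/eqP; rewrite -subset0 -AB; exact: setSI.
    by rewrite set0U.
  have f1 : F1 = (F1 :|: F2) :&: A.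
    rewrite setIUl (setIidPl t1).
    have -> : F2 :&: A = set0 by apply/eqP; rewrite -subset0 -AB setIC; exact: setIS.
    by rewrite setU0.
  have f2 : F2 = (F1 :|: F2) :&: B.
    rewrite setIUl (setIidPl t2).
    have -> : F1 :&: B = set0 by apply/eqP; rewrite -subset0 -AB; exact: setSI.
    by rewrite set0U.
  by congr pair; [rewrite e1 f1 e | rewrite e2 f2 e].
rewrite /EU ePS big_imset //= pair_big /=.
apply: eq_big => [[E1 E2]|[E1 E2]] //=.
rewrite inE /= !inE => /andP [s1 s2].
by rewrite /h /= w_split.
Qed.

Lemma EU_add1 (e : T) (A : {set T}) (F : {set T} -> R) : e \notin A ->
  EU (e |: A) F = (1 - p) * EU A F + p * EU A (fun E => F (e |: E)).
Proof.
move=> eA.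
have d : [set e] :&: A = set0.
  apply/setP => x; rewrite !inE; apply/negbTE; apply/andP => [[/eqP -> ]].
  by apply/negP.
rewrite EU_split // powerset1 big_setU1 /=; last first.
  rewrite inE; apply/eqP => h.
  by have := set11 e; rewrite -h inE.
rewrite big_set1 /EU !big_distrr /=.
have w0 : w [set e] set0 = 1 - p by rewrite /w cards0 cards1 /=; ring.
have w1 : w [set e] [set e] = p by rewrite /w cards1 subnn /=; ring.
rewrite w0 w1; congr Rplus; apply: eq_bigr => E _; rewrite ?set0U; ring.
Qed.

Lemma EU_gen (U : {set T}) (x : R) :
  EU U (fun E => x ^ #|E|) = (p * x + 1 - p) ^ #|U|.
Proof.
have [k lek] := ubnP #|U|; elim: k U lek => // k IH U.
have [->|[e eU]] := set_0Vmem U.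
  move=> _; rewrite /EU powerset0 big_set1 /w !cards0 /=; ring.
rewrite ltnS => lek.
rewrite -{1}(setD1K eU) EU_add1 ?setD11 //.
have cU : #|U| = (#|U :\ e|).+1 by rewrite (cardsD1 e U) eU.
rewrite cU /= IH; last by rewrite -ltnS -cU.
have -> : EU (U :\ e) (fun E => x ^ #|e |: E|) = x * EU (U :\ e) (fun E => x ^ #|E|).
  rewrite /EU big_distrr /=; apply: eq_big => // E; rewrite inE => sE.
  rewrite cardsU1.
  have -> : e \notin E.
    apply/negP => eE; have := subsetP sE e eE; by rewrite setD11.
  rewrite add1n /=; ring.
rewrite IH; last by rewrite -ltnS -cU.
ring.
Qed.


Lemma EU_ext (U : {set T}) (F G : {set T} -> R) :
  (forall E : {set T}, E \subset U -> F E = G E) -> EU U F = EU U G.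
Proof.
by move=> H; rewrite /EU; apply: eq_bigr => E; rewrite inE => sE; rewrite H.
Qed.

Lemma EU_mass (U : {set T}) : EU U (fun _ => 1) = 1.
Proof.
have H := EU_gen U 1.
have e1 : p * 1 + 1 - p = 1 by ring.
rewrite e1 pow1 in H; rewrite -[RHS]H.
apply: EU_ext => E _ /=; rewrite pow1 //.
Qed.

Lemma w_ge0 (U E : {set T}) : 0 <= p <= 1 -> 0 <= w U E.
Proof.
move=> hp; rewrite /w; apply: Rmult_le_pos; apply: pow_le; lra.
Qed.

Lemma EU_le (U : {set T}) (F G : {set T} -> R) : 0 <= p <= 1 ->
  (forall E : {set T}, E \subset U -> F E <= G E) -> EU U F <= EU U G.
Proof.
move=> hp H; rewrite /EU; apply: Rle_big => E; rewrite inE => sE.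
apply: Rmult_le_compat_l; [exact: w_ge0 | exact: H].
Qed.

Lemma EU_scal (U : {set T}) (F : {set T} -> R) (a : R) :
  EU U (fun E => a * F E) = a * EU U F.
Proof. rewrite /EU big_distrr /=; apply: eq_bigr => E _; ring. Qed.

Lemma EU_plus (U : {set T}) (F G : {set T} -> R) :
  EU U (fun E => F E + G E) = EU U F + EU U G.
Proof. rewrite /EU -big_split /=; apply: eq_bigr => E _; ring. Qed.

Lemma EU_sum (I : finType) (P : pred I) (U : {set T}) (f : I -> {set T} -> R) :
  EU U (fun E => \big[Rplus/0]_(i | P i) f i E) = \big[Rplus/0]_(i | P i) EU U (f i).
Proof.
rewrite /EU; under eq_bigr => E _ do rewrite big_distrr /=.
by rewrite exchange_big.
Qed.

Lemma EU_atom (U : {set T}) (e : T) (x : R) : e \in U ->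
  EU U (fun E => (if e \in E then 1 else 0) * x ^ #|E|)
  = p * x * (p * x + 1 - p) ^ (#|U| - 1).
Proof.
move=> eU.
have cU : #|U| = (#|U :\ e|).+1 by rewrite (cardsD1 e U) eU.
rewrite -{1}(setD1K eU) EU_add1 ?setD11 // cU subSS subn0 -EU_gen.
rewrite (EU_ext _ (fun E => (if e \in E then 1 else 0) * x ^ #|E|) (fun _ => 0)); last first.
  move=> E sE; have -> : e \in E = false.
    apply/negP => eE; have := subsetP sE e eE; by rewrite setD11.
  ring.
rewrite (EU_ext _ (fun E => (if e \in e |: E then 1 else 0) * x ^ #|e |: E|)
                (fun E => x * x ^ #|E|)); last first.
  move=> E sE; rewrite setU11 cardsU1.
  have -> : e \notin E.
    apply/negP => eE; have := subsetP sE e eE; by rewrite setD11.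
  rewrite add1n /=; ring.
rewrite EU_scal.
have -> : EU (U :\ e) (fun _ => 0) = 0.
  by rewrite /EU big1 // => E _; ring.
ring.
Qed.

Lemma card_sumR (U E : {set T}) : E \subset U ->
  INR #|E| = \big[Rplus/0]_(e in U) (if e \in E then 1 else 0).
Proof.
move=> sE.
rewrite -sum1_card (big_morph INR plus_INR (erefl (INR 0))) /=.
rewrite [RHS]big_mkcond /= [LHS]big_mkcond /=.
apply: eq_bigr => e _.
case eE: (e \in E); case eU: (e \in U) => //=.
by have := subsetP sE e eE; rewrite eU.
Qed.

Lemma EU_cardx (U : {set T}) (x : R) :
  EU U (fun E => INR #|E| * x ^ #|E|)
  = INR #|U| * (p * x * (p * x + 1 - p) ^ (#|U| - 1)).
Proof.
rewrite (EU_ext _ _ (fun E => \big[Rplus/0]_(e in U)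
           ((if e \in E then 1 else 0) * x ^ #|E|))); last first.
  move=> E sE; rewrite (card_sumR _ _ sE) big_distrl //.
rewrite EU_sum.
rewrite (eq_bigr (fun _ => p * x * (p * x + 1 - p) ^ (#|U| - 1))); last first.
  by move=> e eU; rewrite EU_atom.
by rewrite big_const iter_Rplus.
Qed.

End Gen.
Arguments EU {T} p U F.
Arguments w {T} p U E.
Arguments EU_ext {T p U} F G.


Section Graph.
Variable n : nat.
Implicit Types (E : {set {set 'I_n}}) (v u : 'I_n).

Definition Sv v : {set {set 'I_n}} := [set e in pairs n | v \in e].
Definition Tv v : {set {set 'I_n}} := pairs n :\: Sv v.
Definition iso v E : bool := [forall e in E, v \notin e].

Lemma pair_inj v : injective (fun u : 'I_n => [set u; v]).
Proof.
move=> u u' /= h.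
have hu : u \in [set u'; v] by rewrite -h set21.
have hu' : u' \in [set u; v] by rewrite h set21.
move: hu hu'; rewrite !inE => /orP [/eqP //|/eqP uv] /orP [/eqP //|/eqP u'v].
by rewrite uv u'v.
Qed.

Lemma Sv_im v : Sv v = (fun u : 'I_n => [set u; v]) @: [set~ v].
Proof.
apply/setP => e; rewrite !inE; apply/idP/imsetP.
  move=> /andP [/cards2P [x [y [xy ->]]] ve].
  move: ve; rewrite !inE => /orP [/eqP ->|/eqP ->].
    by exists y; rewrite ?inE 1?eq_sym // setUC.
  by exists x; rewrite ?inE.
move=> [u]; rewrite !inE => uv ->.
by rewrite cards2 uv set22.
Qed.

Lemma card_Sv v : #|Sv v| = (n - 1)%nat.
Proof. by rewrite Sv_im card_imset ?cardsC1 ?card_ord ?subn1 //; exact: pair_inj. Qed.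

Lemma Sv_sub v : Sv v \subset pairs n.
Proof. by apply/subsetP => e; rewrite inE => /andP []. Qed.

Lemma SvT v : pairs n = Sv v :|: Tv v.
Proof. by rewrite /Tv -{1}(setID (pairs n) (Sv v)) (setIidPr (Sv_sub v)). Qed.

Lemma SvT0 v : Sv v :&: Tv v = set0.
Proof.
apply/setP => e; rewrite /Tv !inE.
by case: (#|e| == 2%nat); case: (v \in e).
Qed.

Lemma Y_sum E : Y n E = \big[Rplus/0]_(v : 'I_n) (if iso v E then 1 else 0).
Proof.
rewrite /Y /Yiso -sum1_card (big_morph INR plus_INR (erefl (INR 0))) /=.
rewrite big_mkcond /=; apply: eq_bigr => v _; rewrite inE /iso.
by case: [forall e in E, v \notin e].
Qed.

Lemma Yiso_anti E E' : E \subset E' -> (Yiso n E' <= Yiso n E)%nat.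
Proof.
move=> sE; apply: subset_leq_card; apply/subsetP => v; rewrite !inE.
move=> /forall_inP h; apply/forall_inP => e eE; apply: h; exact: (subsetP sE).
Qed.

Lemma iso_split v E : E \subset pairs n ->
  if iso v E then E :&: Sv v = set0 /\ E :&: Tv v = E
  else (0 < #|E :&: Sv v|)%nat.
Proof.
move=> sE; case h: (iso v E).
  have e0 : E :&: Sv v = set0.
    apply/setP => e; rewrite !inE; apply/negbTE; apply/andP => [[eE /andP [_ ve]]].
    by move/forall_inP: h => /(_ e eE); rewrite ve.
  split => //; apply/setP => e; rewrite /Tv !inE.
  case eE: (e \in E) => //=.
  have := subsetP sE e eE; rewrite inE => ->.
  move/forall_inP: h => /(_ e eE) /negbTE -> //.
move/negbT: h; rewrite /iso negb_forall_in => /existsP [e /andP [eE]].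
rewrite negbK => ve; apply/card_gt0P; exists e; rewrite !inE eE ve andbT /=.
by have := subsetP sE e eE; rewrite inE.
Qed.

Lemma Y_Tv_bound v E : E \subset pairs n ->
  (Yiso n (E :&: Tv v) <= Yiso n E + 1 + #|E :&: Sv v|)%nat.
Proof.
move=> sE.
pose N := [set u | [set u; v] \in E :&: Sv v].
have cN : (#|N| <= #|E :&: Sv v|)%nat.
  rewrite -(card_imset N (@pair_inj v)); apply: subset_leq_card.
  by apply/subsetP => e /imsetP [u]; rewrite inE => h ->.
rewrite /Yiso.
apply: (leq_trans (n := #|[set u | [forall e in E, u \notin e]] :|: [set v] :|: N|)).
  apply: subset_leq_card; apply/subsetP => u; rewrite !inE => /forall_inP hu.
  case iu: [forall e in E, u \notin e] => //=.
  case uv: (u == v) => //=.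
  move/negbT: iu; rewrite negb_forall_in => /existsP [e /andP [eE]]; rewrite negbK => ue.
  have eP : e \in pairs n by exact: (subsetP sE).
  have eS : e \in Sv v.
    case eS: (e \in Sv v) => //.
    have : e \in E :&: Tv v by rewrite in_setI eE /Tv in_setD eS eP.
    by move/hu; rewrite ue.
  have ve : v \in e by move: eS; rewrite inE => /andP [].
  move: (eP); rewrite inE => /cards2P [x [y [xy ex]]].
  have -> : [set u; v] = e.
    rewrite ex; move: ue ve; rewrite ex !inE.
    move=> /orP [/eqP eu|/eqP eu] /orP [/eqP vx|/eqP vy].
    - by move: uv; rewrite eu vx eqxx.
    - by rewrite eu vy.
    - by rewrite eu vx setUC.
    - by move: uv; rewrite eu vy eqxx.
  rewrite eE /=; move: eP; rewrite inE => ->; by rewrite eqxx orbT.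
apply: (leq_trans (n := #|[set u | [forall e in E, u \notin e]] :|: [set v]| + #|N|)).
  by rewrite cardsU leq_subr.
apply: leq_add => //.
by rewrite -(cards1 v) cardsU leq_subr.
Qed.


Lemma setUI_r {T : finType} {A B E1 E2 : {set T}} : A :&: B = set0 ->
  E1 \subset A -> E2 \subset B -> (E1 :|: E2) :&: B = E2 /\ (E1 :|: E2) :&: A = E1.
Proof.
move=> AB s1 s2; split.
  rewrite setIUl (setIidPl s2).
  have -> : E1 :&: B = set0 by apply/eqP; rewrite -subset0 -AB; exact: setSI.
  by rewrite set0U.
rewrite setIUl (setIidPl s1).
have -> : E2 :&: A = set0 by apply/eqP; rewrite -subset0 -AB setIC; exact: setIS.
by rewrite setU0.
Qed.

Variable p : R.

Lemma ExpEU f : Expect n p f = EU p (pairs n) f.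
Proof. by []. Qed.

Lemma Exp_prod v (G : {set {set 'I_n}} -> R) (H : nat -> R) :
  Expect n p (fun E => G (E :&: Tv v) * H #|E :&: Sv v|)
  = EU p (Tv v) G * EU p (Sv v) (fun E => H #|E|).
Proof.
rewrite ExpEU {1}(SvT v) EU_split ?SvT0 // Rmult_comm /EU big_distrl /=.
apply: eq_bigr => E1; rewrite inE => s1; rewrite big_distrr /=.
apply: eq_bigr => E2; rewrite inE => s2.
have [-> ->] := setUI_r (SvT0 v) s1 s2; ring.
Qed.

Lemma K2 v (a : R) :
  Expect n p (fun E => (if iso v E then 1 else 0) * exp (a * Y n E))
  = EU p (Tv v) (fun E => exp (a * Y n E)) * (1 - p) ^ (n - 1).
Proof.
rewrite (ExpEU (fun E => _ * _)).
rewrite (EU_ext _ (fun E => exp (a * Y n (E :&: Tv v)) * 0 ^ #|E :&: Sv v|)); last first.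
  move=> E sE; have := iso_split v E sE; case: (iso v E).
    by move=> [-> ->]; rewrite cards0 /=; ring.
  by case: #|E :&: Sv v| => //= k _; ring.
rewrite -ExpEU (Exp_prod v (fun E => exp (a * Y n E)) (fun k => 0 ^ k)) EU_gen card_Sv.
congr Rmult; congr pow; ring.
Qed.

Lemma K1 (a : R) :
  Expect n p (fun E => Y n E * exp (a * Y n E))
  = \big[Rplus/0]_(v : 'I_n) Expect n p (fun E => (if iso v E then 1 else 0) * exp (a * Y n E)).
Proof.
rewrite !ExpEU -EU_sum; apply: EU_ext => E _.
by rewrite {1}Y_sum big_distrl.
Qed.

Lemma K4 v (a : R) : 0 <= a -> 0 <= p <= 1 ->
  EU p (Tv v) (fun E => exp (a * Y n E)) * EU p (Sv v) (fun E => exp (- a * INR (1 + #|E|)))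
  <= Expect n p (fun E => exp (a * Y n E)).
Proof.
move=> ha hp.
rewrite -(Exp_prod v (fun E => exp (a * Y n E)) (fun k => exp (- a * INR (1 + k)))).
rewrite !ExpEU; apply: EU_le => // E sE.
rewrite -exp_plus; apply: exp_le.
have := leR_nat (Y_Tv_bound v E sE); rewrite !plus_INR /Y /= => h.
nra.
Qed.


Lemma Bgen v c : EU p (Sv v) (fun E => exp (c * INR (1 + #|E|)))
  = exp c * (p * exp c + 1 - p) ^ (n - 1).
Proof.
rewrite (EU_ext _ (fun E => exp c * exp c ^ #|E|)); last first.
  by move=> E _; rewrite plus_INR Rmult_plus_distr_l exp_plus !exp_INR /=; ring.
by rewrite EU_scal EU_gen card_Sv.
Qed.

Lemma EW1 v : EU p (Sv v) (fun E => INR (1 + #|E|)) = 1 + INR (n - 1) * p.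
Proof.
rewrite (EU_ext _ (fun E => 1 + INR #|E| * 1 ^ #|E|)); last first.
  by move=> E _; rewrite plus_INR pow1 /=; ring.
rewrite EU_plus EU_mass EU_cardx card_Sv.
have -> : p * 1 + 1 - p = 1 by ring.
rewrite pow1; ring.
Qed.

Lemma EW2 v a : EU p (Sv v) (fun E => INR (1 + #|E|) * exp (a * INR (1 + #|E|)))
  = exp a * ((p * exp a + 1 - p) ^ (n - 1)
             + INR (n - 1) * (p * exp a * (p * exp a + 1 - p) ^ (n - 1 - 1))).
Proof.
rewrite (EU_ext _ (fun E => exp a * (exp a ^ #|E|) + exp a * (INR #|E| * exp a ^ #|E|))); last first.
  move=> E _; rewrite plus_INR Rmult_plus_distr_l exp_plus !exp_INR /=; ring.
by rewrite EU_plus !EU_scal EU_gen EU_cardx card_Sv; ring.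
Qed.

Lemma K6 v a : 0 <= a -> 0 <= p <= 1 -> (2 <= n)%nat ->
  EU p (Sv v) (fun E => exp (a * INR (1 + #|E|))) <= 1 + a / 2 * gammaER n p a.
Proof.
move=> ha hp n2.
apply: (Rle_trans _ (EU p (Sv v) (fun E => 1 + a / 2 *
   (INR (1 + #|E|) * exp (a * INR (1 + #|E|)) + INR (1 + #|E|))))).
  apply: EU_le => // E _.
  have hW : 0 <= INR (1 + #|E|) by apply: pos_INR.
  have := exp_half (a * INR (1 + #|E|)) ltac:(nra).
  lra.
rewrite EU_plus EU_mass EU_scal EU_plus EW1 EW2.
apply: Req_le; rewrite /gammaER.
case: n n2 => [|[|m]] // _.
have -> : (m.+2 - 1 = m.+1)%nat by [].
have -> : (m.+1 - 1 = m)%nat by rewrite subn1.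
have -> : (m.+2 - 2 = m)%nat by rewrite subSS ?subn0 // subn1.
rewrite !S_INR /=; ring.
Qed.


Lemma EU_ge0 (T : finType) (U : {set T}) (F : {set T} -> R) : 0 <= p <= 1 ->
  (forall E : {set T}, 0 <= F E) -> 0 <= EU p U F.
Proof.
move=> hp H; rewrite /EU; apply: Rle0_big => E _.
apply: Rmult_le_pos; [exact: w_ge0 | exact: H].
Qed.

Lemma Av_bound v a : 0 <= a -> 0 <= p <= 1 -> (2 <= n)%nat ->
  EU p (Tv v) (fun E => exp (a * Y n E))
  <= Expect n p (fun E => exp (a * Y n E)) * (1 + a / 2 * gammaER n p a).
Proof.
move=> ha hp n2.
set A := EU p (Tv v) _.
set f := Expect n p _.
have A0 : 0 <= A by apply: EU_ge0 => // E; apply: Rlt_le; apply: exp_pos.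
have f0 : 0 <= f by rewrite /f ExpEU; apply: EU_ge0 => // E; apply: Rlt_le; apply: exp_pos.
have h4 := K4 v a ha hp; rewrite -/A -/f in h4.
have h6 := K6 v a ha hp n2.
have hB : 1 <= EU p (Sv v) (fun E => exp (a * INR (1 + #|E|)))
            * EU p (Sv v) (fun E => exp (- a * INR (1 + #|E|))).
  rewrite !Bgen.
  have -> : exp a * (p * exp a + 1 - p) ^ (n - 1) * (exp (- a) * (p * exp (- a) + 1 - p) ^ (n - 1))
     = (exp a * exp (- a)) * ((p * exp a + 1 - p) * (p * exp (- a) + 1 - p)) ^ (n - 1).
    rewrite Rpow_mult_distr; ring.
  rewrite -exp_plus Rplus_opp_r exp_0 Rmult_1_l.
  apply: pow_R1_Rle; exact: prod_ge1.
set Ba := EU p (Sv v) (fun E => exp (a * INR (1 + #|E|))) in h6 hB.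
set Bm := EU p (Sv v) (fun E => exp (- a * INR (1 + #|E|))) in h4 hB.
have Ba0 : 0 <= Ba by rewrite /Ba; apply: EU_ge0 => // E; apply: Rlt_le; apply: exp_pos.
have Bm0 : 0 <= Bm by rewrite /Bm; apply: EU_ge0 => // E; apply: Rlt_le; apply: exp_pos.
apply: (Rle_trans _ (A * Bm * Ba)).
  have : A * 1 <= A * (Ba * Bm) by apply: Rmult_le_compat_l.
  lra.
apply: (Rle_trans _ (f * Ba)); first by apply: Rmult_le_compat_r.
by apply: Rmult_le_compat_l.
Qed.

Lemma mu_sum : muY n p = \big[Rplus/0]_(v : 'I_n) (1 - p) ^ (n - 1).
Proof.
rewrite /muY.
have -> : Expect n p (fun E => Y n E) = Expect n p (fun E => Y n E * exp (0 * Y n E)).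
  rewrite !ExpEU; apply: EU_ext => E _; rewrite Rmult_0_l exp_0; ring.
rewrite K1; apply: eq_bigr => v _; rewrite K2.
rewrite (EU_ext _ (fun _ => 1)); first by rewrite EU_mass; ring.
by move=> E _; rewrite Rmult_0_l exp_0.
Qed.

Lemma Key a G : 0 <= a -> 0 <= p <= 1 -> (2 <= n)%nat -> gammaER n p a <= G ->
  Expect n p (fun E => Y n E * exp (a * Y n E))
  <= muY n p * (1 + a / 2 * G) * Expect n p (fun E => exp (a * Y n E)).
Proof.
move=> ha hp n2 hG.
rewrite K1 mu_sum big_distrl big_distrl /=.
apply: Rle_big => v _; rewrite K2.
have q0 : 0 <= (1 - p) ^ (n - 1) by apply: pow_le; lra.
have := Av_bound v a ha hp n2.
have f0 : 0 <= Expect n p (fun E => exp (a * Y n E)).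
  by rewrite ExpEU; apply: EU_ge0 => // E; apply: Rlt_le; apply: exp_pos.
move=> h.
have : Expect n p (fun E => exp (a * Y n E)) * (1 + a / 2 * gammaER n p a)
       <= Expect n p (fun E => exp (a * Y n E)) * (1 + a / 2 * G).
  apply: Rmult_le_compat_l => //.
  have : 0 <= a / 2 by lra.
  nra.
move=> h'.
have := Rmult_le_compat_r _ _ _ q0 (Rle_trans _ _ _ h h').
lra.
Qed.

End Graph.


Lemma dexp (c y x : R) :
  derivable_pt_lim (fun a => c * exp (a * y)) x (c * (y * exp (x * y))).
Proof.
have h1 : derivable_pt_lim (fun a => a * y) x y.
  apply: (dpl_ext (fun a => y * a)) => [a|]; first by rewrite Rmult_comm.
  have := derivable_pt_lim_scal id y x 1 (derivable_pt_lim_id x).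
  by rewrite Rmult_1_r.
have h2 := derivable_pt_lim_comp _ exp x _ _ h1 (derivable_pt_lim_exp (x * y)).
have := derivable_pt_lim_scal _ c x _ h2.
rewrite (Rmult_comm (exp (x * y)) y) => h.
by apply: (dpl_ext _ _ _ _ _ h) => a.
Qed.

Lemma f_deriv n p x :
  derivable_pt_lim (fun a => Expect n p (fun E => exp (a * Y n E))) x
    (Expect n p (fun E => Y n E * exp (x * Y n E))).
Proof.
exact (deriv_sum _ (index_enum _) (fun E => E \in powerset (pairs n))
          (fun E a => prob n p E * exp (a * Y n E))
          (fun E a => prob n p E * (Y n E * exp (a * Y n E))) x
          (fun E => dexp (prob n p E) (Y n E) x)).
Qed.

Lemma mgf_bound n p a G : 0 <= a -> 0 <= p <= 1 -> (2 <= n)%nat ->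
  (forall x, 0 <= x <= a -> gammaER n p x <= G) ->
  Expect n p (fun E => exp (a * Y n E)) <= exp (muY n p * a + muY n p * G * a ^ 2 / 4).
Proof.
move=> ha hp n2 hG.
set mu := muY n p.
pose f := fun x => Expect n p (fun E => exp (x * Y n E)).
pose f' := fun x => Expect n p (fun E => Y n E * exp (x * Y n E)).
pose h := fun x => - mu * x + (- (mu * G / 4)) * (x * x).
pose h' := fun x => - mu * 1 + (- (mu * G / 4)) * (1 * x + x * 1).
have Dh : forall x, derivable_pt_lim h x (h' x).
  move=> x; apply: derivable_pt_lim_plus.
    exact: (derivable_pt_lim_scal id (- mu) x 1 (derivable_pt_lim_id x)).
  apply: (derivable_pt_lim_scal (fun x => x * x)).
  exact: (derivable_pt_lim_mult id id x 1 1 (derivable_pt_lim_id x) (derivable_pt_lim_id x)).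
pose g := fun x => f x * exp (h x).
pose g' := fun x => f' x * exp (h x) + f x * (exp (h x) * h' x).
have Dg : forall x, derivable_pt_lim g x (g' x).
  move=> x.
  have De := derivable_pt_lim_comp h exp x _ _ (Dh x) (derivable_pt_lim_exp (h x)).
  have := derivable_pt_lim_mult f (comp exp h) x _ _ (f_deriv n p x) De.
  by apply: dpl_ext.
have f1 : f 0 = 1.
  rewrite /f ExpEU (EU_ext _ (fun _ => 1)); first exact: EU_mass.
  by move=> E _; rewrite Rmult_0_l exp_0.
have : g a <= g 0.
  apply: (decr_deriv g g') => // x hx.
  rewrite /g'.
  have hk := Key n p x G ltac:(lra) hp n2 (hG x hx).
  rewrite -/(f' x) -/(f x) -/mu in hk.
  have e0 := exp_pos (h x).
  have : f' x + f x * h' x <= 0 by rewrite /h'; nra.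
  nra.
rewrite /g f1 /h. have -> : - mu * 0 + - (mu * G / 4) * (0 * 0) = 0 by ring.
rewrite exp_0 Rmult_1_l => hga.
have e0 := exp_pos (- mu * a + - (mu * G / 4) * (a * a)).
have eq1 : exp (- mu * a + - (mu * G / 4) * (a * a)) * exp (mu * a + mu * G * a ^ 2 / 4) = 1.
  rewrite -exp_plus -[RHS]exp_0; congr exp; rewrite /Rdiv /=; ring.
have e1 := exp_pos (mu * a + mu * G * a ^ 2 / 4).
rewrite -/(f a).
have := Rmult_le_compat_r _ _ _ (Rlt_le _ _ e1) hga.
rewrite Rmult_assoc eq1; lra.
Qed.

Lemma gamma_mono n p s s' : 0 <= p <= 1 -> s <= s' -> gammaER n p s <= gammaER n p s'.
Proof.
move=> hp ss; rewrite /gammaER.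
have e1 := exp_le _ _ ss; have e0 := exp_pos s.
have hX : 0 <= p * exp s + 1 - p by nra.
have hXX : p * exp s + 1 - p <= p * exp s' + 1 - p by nra.
have hn := pos_INR n.
have hZ : 0 <= INR n * p * exp s + 1 - p.
  have : 0 <= INR n * p by nra.
  nra.
have hZZ : INR n * p * exp s + 1 - p <= INR n * p * exp s' + 1 - p.
  have : 0 <= INR n * p by nra.
  nra.
have hP := pow_incr _ _ (n - 2) (conj hX hXX).
have hP0 := pow_le _ (n - 2) hX.
apply Rplus_le_compat_r; apply Rplus_le_compat_r.
apply Rmult_le_compat => //.
  apply Rmult_le_pos => //; lra.
apply Rmult_le_compat => //; lra.
Qed.

Lemma tail_bound n p t th G : 0 <= th -> 0 < sdY n p -> 0 <= p <= 1 -> (2 <= n)%nat ->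
  (forall x, 0 <= x <= th / sdY n p -> gammaER n p x <= G) ->
  tailP n p t <= exp (- th * t + muY n p * G * th ^ 2 / (4 * sdY n p ^ 2)).
Proof.
move=> hth hs hp n2 hG.
set s := sdY n p in hs hG *.
set mu := muY n p.
have ha : 0 <= th / s by apply: Rmult_le_pos => //; apply: Rlt_le; apply: Rinv_0_lt_compat.
apply: (Rle_trans _ (Expect n p (fun E => exp (- th * t - th * mu / s) * exp (th / s * Y n E)))).
  rewrite /tailP !ExpEU; apply: EU_le => // E _.
  case: (Rle_dec t ((Y n E - muY n p) / s)) => h.
    rewrite -exp_0 -exp_plus; apply: exp_le.
    have -> : - th * t - th * mu / s + th / s * Y n E = th * ((Y n E - mu) / s - t)
      by field; lra.
    apply: Rmult_le_pos => //; rewrite /mu; lra.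
  by apply: Rlt_le; apply: Rmult_lt_0_compat; apply: exp_pos.
rewrite ExpEU EU_scal -ExpEU.
have := mgf_bound n p (th / s) G ha hp n2 hG; rewrite -/mu => hm.
apply: (Rle_trans _ (exp (- th * t - th * mu / s) * exp (mu * (th / s) + mu * G * (th / s) ^ 2 / 4))).
  apply: Rmult_le_compat_l => //; apply: Rlt_le; apply: exp_pos.
rewrite -exp_plus; apply: Req_le; congr exp.
field; lra.
Qed.

Lemma mu_pos n p : 0 < p < 1 -> (2 <= n)%nat -> 0 < muY n p.
Proof.
move=> hp n2; rewrite mu_sum big_const iter_Rplus card_ord.
apply: Rmult_lt_0_compat.
  apply: lt_0_INR; apply/ltP; exact: (leq_trans _ n2).
apply: pow_lt; lra.
Qed.

Lemma gamma_pos n p s : 0 < p < 1 -> 0 < gammaER n p s.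
Proof.
move=> hp; rewrite /gammaER.
have e0 := exp_pos s.
have hX : 0 <= p * exp s + 1 - p by nra.
have hn := pos_INR n; have hn1 := pos_INR (n - 1).
have hZ : 0 <= INR n * p * exp s + 1 - p.
  have : 0 <= INR n * p by nra.
  nra.
have hP := pow_le _ (n - 2) hX.
have : 0 <= exp s * (p * exp s + 1 - p) ^ (n - 2) * (INR n * p * exp s + 1 - p).
  apply: Rmult_le_pos => //; apply: Rmult_le_pos => //; lra.
have : 0 <= INR (n - 1) * p by nra.
lra.
Qed.

Lemma tail_le1 n p t : 0 <= p <= 1 -> tailP n p t <= 1.
Proof.
move=> hp; rewrite /tailP ExpEU.
apply: (Rle_trans _ (EU p (pairs n) (fun _ => 1))); last by rewrite EU_mass; lra.
apply: EU_le => // E _; case: Rle_dec => /= _; lra.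
Qed.

Theorem mainTheorem2 (n : nat) (p theta0 t : R) :
  (2 <= n)%nat -> 0 < p < 1 -> 0 <= theta0 -> 0 <= t ->
  (t <= theta0 * muY n p * gammaER n p (theta0 / sdY n p) / (2 * sdY n p ^ 2) ->
     tailP n p t <=
       exp (- (t ^ 2 * sdY n p ^ 2) / (muY n p * gammaER n p (theta0 / sdY n p)))) /\
  (theta0 * muY n p * gammaER n p (theta0 / sdY n p) / (2 * sdY n p ^ 2) < t ->
     tailP n p t <=
       exp (- theta0 * t
            + muY n p * gammaER n p (theta0 / sdY n p) * theta0 ^ 2 / (4 * sdY n p ^ 2))).
Proof.
move=> n2 hp hth ht.
have hp' : 0 <= p <= 1 by lra.
have s0 : 0 <= sdY n p := sqrt_pos _.
have mu0 := mu_pos n p hp n2.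
have G0 := gamma_pos n p (theta0 / sdY n p) hp.
case: (Rle_lt_or_eq_dec 0 (sdY n p) s0) => [spos|seq].
  have hG : forall x, 0 <= x <= theta0 / sdY n p ->
      gammaER n p x <= gammaER n p (theta0 / sdY n p).
    by move=> x hx; apply: gamma_mono => //; lra.
  have TB : forall th, 0 <= th <= theta0 ->
      tailP n p t <= exp (- th * t + muY n p * gammaER n p (theta0 / sdY n p) * th ^ 2
                                      / (4 * sdY n p ^ 2)).
    move=> th hth'; apply: tail_bound => //; first lra.
    move=> x hx; apply: hG; split; first lra.
    apply: (Rle_trans _ (th / sdY n p)); first lra.
    apply: Rmult_le_compat_r; last lra.
    by apply: Rlt_le; apply: Rinv_0_lt_compat.
  set s := sdY n p in spos TB *.
  set mu := muY n p in mu0 TB *.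
  set G := gammaER n p (theta0 / s) in G0 TB *.
  have s2 : 0 < s ^ 2 by apply: pow_lt.
  have muG : 0 < mu * G by apply: Rmult_lt_0_compat.
  split => [hle|hlt]; last by apply: TB; lra.
  pose th := t * (2 * s ^ 2 / (mu * G)).
  have k0 : 0 < 2 * s ^ 2 / (mu * G).
    apply: Rmult_lt_0_compat; first lra.
    exact: Rinv_0_lt_compat.
  have hth0 : 0 <= th by rewrite /th; apply: Rmult_le_pos => //; lra.
  have hth1 : th <= theta0.
    have := Rmult_le_compat_r _ _ _ (Rlt_le _ _ k0) hle.
    have -> : theta0 * mu * G / (2 * s ^ 2) * (2 * s ^ 2 / (mu * G)) = theta0.
      by field; split; lra.
    by [].
  have := TB th (conj hth0 hth1).
  have -> : - th * t + mu * G * th ^ 2 / (4 * s ^ 2) = - (t ^ 2 * s ^ 2) / (mu * G).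
    by rewrite /th; field; split; lra.
  by [].
have hs : sdY n p = 0 by rewrite -seq.
rewrite hs; split => [_|hlt].
  have -> : - (t ^ 2 * 0 ^ 2) / (muY n p * gammaER n p (theta0 / 0)) = 0.
    by rewrite /Rdiv /=; ring.
  rewrite exp_0; exact: tail_le1.
apply: (Rle_trans _ 0); last by apply: Rlt_le; apply: exp_pos.
have ht0 : 0 < t.
  move: hlt; rewrite /Rdiv /= Rmult_0_l Rmult_0_r Rinv_0 Rmult_0_r; lra.
rewrite /tailP ExpEU (EU_ext _ (fun _ => 0 * 1)); last first.
  move=> E _; rewrite hs /Rdiv Rinv_0 Rmult_0_r.
  case: Rle_dec => /= h; lra.
by rewrite EU_scal EU_mass; lra.
Qed.
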